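(* Let $\bar\gamma\in(0,2\pi)$ be fixed and, for each integer $\rho\ge1$, let $\tau_\rho\in(0,\pi)$ be the solution of $$\frac{\tau-\bar\gamma/2}{2\rho-1}-\tan^{-1}\!\Big(\frac{\sin\tau}{2\rho-\cos\tau}\Big)=0,$$ and set $\bar t_\rho=\frac{4\rho\tau_\rho-\bar\gamma}{2\rho-1}$ (this is the minimum transfer time to $(\gamma,0,\gamma)$ with $\gamma=\bar\gamma+2(\rho-1)\pi$, minus $2(\rho-1)\pi$). Then as $\rho\to\infty$, $\tau_\rho\to\tau_\infty$, where $\tau_\infty$ is the solution of $\tau-\sin\tau-\bar\gamma/2=0$, and $\bar t_\rho\to 2\tau_\infty$.
   Context: $\tan^{-1}$ takes values in $(-\pi/2,\pi/2)$. *)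

(* Defs.v *)
From Stdlib Require Import Reals Lra.
Open Scope R_scope.

Definition tau_eq (gbar : R) (rho : nat) (tau : R) : Prop :=
  (tau - gbar / 2) / (2 * INR rho - 1)
  - atan (sin tau / (2 * INR rho - cos tau)) = 0.

Definition tbar (gbar : R) (rho : nat) (tau : R) : R :=
  (4 * INR rho * tau - gbar) / (2 * INR rho - 1).

(* Main.v *)
Require Import Defs.
From Stdlib Require Import Reals Lra Lia.
Open Scope R_scope.

Lemma atan_pos_bound x : 0 < x -> Rabs (atan x - x) <= x ^ 3.
Proof.
  intros Hx.
  destruct (MVT_cor2 atan (fun c => / (1 + c ^ 2)) 0 x Hx) as [c [Hc1 Hc2]].
  { intros c _. apply derivable_pt_lim_atan. }
  rewrite atan_0 in Hc1.
  set (u := / (1 + c ^ 2)) in *.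
  assert (Hu : u * (1 + c^2) = 1) by (unfold u; field; nra).
  assert (Hu0 : 0 < u) by (unfold u; apply Rinv_0_lt_compat; nra).
  assert (E : atan x - x = - (x * c^2 * u)) by nra.
  rewrite E, Rabs_Ropp, Rabs_right by (apply Rle_ge; apply Rmult_le_pos; [nra|lra]).
  assert (c^2 * u <= c^2) by nra.
  assert (c^2 <= x^2) by nra.
  nra.
Qed.

Lemma atan_bound3 x : Rabs (atan x - x) <= Rabs x ^ 3.
Proof.
  destruct (Rtotal_order x 0) as [H|[H|H]].
  - pose proof (atan_pos_bound (-x) ltac:(lra)) as B.
    rewrite atan_opp in B.
    replace (- atan x - - x) with (- (atan x - x)) in B by ring.
    rewrite Rabs_Ropp in B. rewrite (Rabs_left x) by lra. exact B.
  - subst. rewrite atan_0. rewrite Rminus_0_r, Rabs_R0. simpl. lra.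
  - rewrite (Rabs_right x) by lra. apply atan_pos_bound; lra.
Qed.

Lemma key_bound (g n t : R) : 1 <= n ->
  (t - g/2)/n - atan (sin t / (n + 1 - cos t)) = 0 ->
  Rabs (t - sin t - g/2) <= 3 / n.
Proof.
  intros Hn Heq.
  set (D := n + 1 - cos t) in *.
  pose proof (COS_bound t) as Hc. pose proof (SIN_bound t) as Hs.
  assert (HD : n <= D) by (unfold D; lra).
  set (x := sin t / D) in *.
  assert (Hx : Rabs x <= / n).
  { unfold x. unfold Rdiv. rewrite Rabs_mult, Rabs_inv, (Rabs_right D) by lra.
    apply Rle_trans with (1 * / D).
    - apply Rmult_le_compat_r. left; apply Rinv_0_lt_compat; lra.
      apply Rabs_le; lra.
    - rewrite Rmult_1_l. apply Rinv_le_contravar; lra. }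
  assert (Ht : t - g/2 = n * atan x).
  { assert (Ha : (t - g/2)/n = atan x) by lra. rewrite <- Ha. field. lra. }
  assert (E : t - sin t - g/2 = n * (atan x - x) + (sin t * (cos t - 1) / D)).
  { replace (t - sin t - g/2) with (n * atan x - sin t) by lra.
    unfold x, D. field. unfold D in HD; lra. }
  rewrite E.
  eapply Rle_trans. apply Rabs_triang.
  assert (A1 : Rabs (n * (atan x - x)) <= 1 / n).
  { rewrite Rabs_mult, Rabs_right by lra.
    pose proof (atan_bound3 x).
    assert (Rabs x ^ 3 <= / n ^ 3).
    { rewrite <- pow_inv. apply pow_incr. split; [apply Rabs_pos|exact Hx]. }
    apply Rle_trans with (n * / n ^ 3).
    - apply Rmult_le_compat_l; lra.
    - replace (n * / n^3) with (/n * /n) by (field; lra).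
      assert (0 < / n <= 1).
      { split. apply Rinv_0_lt_compat; lra. rewrite <- Rinv_1. apply Rinv_le_contravar; lra. }
      unfold Rdiv. nra. }
  assert (A2 : Rabs (sin t * (cos t - 1) / D) <= 2 / n).
  { unfold Rdiv. rewrite !Rabs_mult, Rabs_inv, (Rabs_right D) by lra.
    assert (Rabs (sin t) <= 1) by (apply Rabs_le; lra).
    assert (Rabs (cos t - 1) <= 2) by (apply Rabs_le; lra).
    assert (0 < / D <= / n).
    { split. apply Rinv_0_lt_compat; lra. apply Rinv_le_contravar; lra. }
    assert (0 <= Rabs (sin t)) by apply Rabs_pos.
    assert (0 <= Rabs (cos t - 1)) by apply Rabs_pos.
    assert (Rabs (sin t) * Rabs (cos t - 1) <= 2) by nra.
    nra. }
  assert (1/n + 2/n = 3/n) by (field; lra).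
  lra.
Qed.

Lemma f_lt a b : a < b -> a - sin a < b - sin b.
Proof.
  intros Hab.
  pose proof (form3 b (-a)) as F. rewrite sin_neg in F.
  replace ((b - - a)/2) with ((b+a)/2) in F by field.
  replace ((b + - a)/2) with ((b-a)/2) in F by field.
  set (h := (b-a)/2) in *.
  assert (0 < h) by (unfold h; lra).
  pose proof (sin_lt_x h H). pose proof (sin_gt_x (-h) ltac:(lra)).
  rewrite sin_neg in H1.
  pose proof (COS_bound ((b+a)/2)).
  assert (b - a = 2*h) by (unfold h; field).
  assert (Hs : - h < sin h).
  { destruct (Rlt_or_le h PI).
    - pose proof (sin_gt_0 h H H4). lra.
    - pose proof PI2_1. pose proof (SIN_bound h). lra. }
  set (c := cos ((b+a)/2)) in *. set (s := sin h) in *.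
  assert (c * s < h).
  { destruct (Rlt_or_le c 1).
    - assert (0 < (1 - c) * (h + s)) by (apply Rmult_lt_0_compat; lra).
      assert (0 <= (1 + c) * (h - s)) by (apply Rmult_le_pos; lra).
      nra.
    - assert (Hc1 : c = 1) by lra. rewrite Hc1. lra. }
  lra.
Qed.

Lemma f_le a b : a <= b -> a - sin a <= b - sin b.
Proof. intros [H|H]. left; now apply f_lt. subst; lra. Qed.

Theorem mainTheorem9 (gbar : R) (tau : nat -> R) (tau_inf : R) :
  0 < gbar < 2 * PI ->
  (forall rho : nat, (1 <= rho)%nat ->
     0 < tau rho < PI /\ tau_eq gbar rho (tau rho)) ->
  tau_inf - sin tau_inf - gbar / 2 = 0 ->
  Un_cv tau tau_inf /\
  Un_cv (fun rho => tbar gbar rho (tau rho)) (2 * tau_inf).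
Proof.
  intros Hg Htau Hinf.
  assert (KB : forall k, (1 <= k)%nat ->
     1 <= 2 * INR k - 1 /\ INR k <= 2 * INR k - 1 /\
     Rabs (tau k - sin (tau k) - gbar/2) <= 3 / (2 * INR k - 1)).
  { intros k Hk. destruct (Htau k Hk) as [_ He].
    assert (1 <= INR k) by (replace 1 with (INR 1) by reflexivity; apply le_INR; exact Hk).
    split; [lra|split; [lra|]].
    apply key_bound; [lra|]. unfold tau_eq in He.
    replace (2 * INR k - 1 + 1 - cos (tau k)) with (2 * INR k - cos (tau k)) by ring.
    exact He. }
  assert (CV : Un_cv tau tau_inf).
  { intros eps Heps.
    set (f := fun t => t - sin t - gbar/2).
    assert (P1 : 0 < f (tau_inf + eps)).
    { unfold f. pose proof (f_lt tau_inf (tau_inf+eps) ltac:(lra)). lra. }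
    assert (P2 : f (tau_inf - eps) < 0).
    { unfold f. pose proof (f_lt (tau_inf-eps) tau_inf ltac:(lra)). lra. }
    set (d := Rmin (f (tau_inf + eps)) (- f (tau_inf - eps))).
    assert (Hd : 0 < d) by (unfold d; apply Rmin_glb_lt; lra).
    assert (Hd1 : d <= f (tau_inf + eps)) by apply Rmin_l.
    assert (Hd2 : d <= - f (tau_inf - eps)) by apply Rmin_r.
    destruct (INR_unbounded (3 / d)) as [N HN].
    exists (S N). intros k Hk. unfold R_dist.
    destruct (KB k ltac:(lia)) as [Hn1 [Hn2 Hb]].
    assert (INR N <= INR k) by (apply le_INR; lia).
    set (n := 2 * INR k - 1) in *.
    assert (3 / d < n) by lra.
    assert (3 / n < d).
    { apply (Rmult_lt_reg_r n). lra. unfold Rdiv.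
      rewrite Rmult_assoc, Rinv_l by lra.
      apply (Rmult_lt_reg_r (/ d)). apply Rinv_0_lt_compat; lra.
      replace (d * n * / d) with n by (field; lra). lra. }
    assert (Hf : Rabs (f (tau k)) < d) by (unfold f; lra).
    apply Rabs_def1.
    - destruct (Rlt_or_le (tau k - tau_inf) eps) as [L|L]; [exact L|exfalso].
      pose proof (f_le (tau_inf + eps) (tau k) ltac:(lra)).
      assert (f (tau_inf + eps) <= f (tau k)) by (unfold f; lra).
      pose proof (Rle_abs (f (tau k))). lra.
    - destruct (Rlt_or_le (- eps) (tau k - tau_inf)) as [L|L]; [exact L|exfalso].
      pose proof (f_le (tau k) (tau_inf - eps) ltac:(lra)).
      assert (f (tau k) <= f (tau_inf - eps)) by (unfold f; lra).
      pose proof (Rle_abs (- f (tau k))) as RA. rewrite Rabs_Ropp in RA. lra. }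
  split; [exact CV|].
  intros eps Heps.
  destruct (CV (eps/4) ltac:(lra)) as [N1 HN1].
  destruct (INR_unbounded (4 * PI / eps)) as [N2 HN2].
  exists (S (N1 + N2)). intros k Hk. unfold R_dist, tbar.
  destruct (KB k ltac:(lia)) as [Hn1 [Hn2 _]].
  destruct (Htau k ltac:(lia)) as [Ht _].
  pose proof (HN1 k ltac:(lia)) as H1. unfold R_dist in H1.
  assert (INR N2 <= INR k) by (apply le_INR; lia).
  set (n := 2 * INR k - 1) in *.
  replace ((4 * INR k * tau k - gbar) / n - 2 * tau_inf)
    with (2 * (tau k - tau_inf) + (2 * tau k - gbar) / n)
    by (unfold n; field; unfold n in Hn1; lra).
  eapply Rle_lt_trans. apply Rabs_triang.
  rewrite Rabs_mult, (Rabs_right 2) by lra.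
  assert (Rabs ((2 * tau k - gbar) / n) < eps / 2).
  { unfold Rdiv. rewrite Rabs_mult, (Rabs_right (/ n)) by (left; apply Rinv_0_lt_compat; lra).
    assert (H2 : Rabs (2 * tau k - gbar) <= 2 * PI) by (apply Rabs_le; lra).
    assert (H3 : 4 * PI / eps < n) by lra.
    assert (4 * PI < n * eps).
    { apply (Rmult_lt_reg_r (/ eps)). apply Rinv_0_lt_compat; lra.
      replace (n * eps * / eps) with n by (field; lra). exact H3. }
    apply Rle_lt_trans with (2 * PI * / n).
    - apply Rmult_le_compat_r. left; apply Rinv_0_lt_compat; lra. exact H2.
    - apply (Rmult_lt_reg_r n). lra.
      replace (2 * PI * / n * n) with (2 * PI) by (field; lra). lra. }
  lra.
Qed.
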